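(* Let $\widehat{\mathcal T}_\bullet,\widehat{\mathcal T}_\star$ be admissible hierarchical meshes and let $\widehat{\mathcal T}_\circ$ be the hierarchical mesh with domains $\widehat\Omega^k_\circ=\widehat\Omega^k_\bullet\cup\widehat\Omega^k_\star$, $k\in\mathbb N_0$ (equivalently $\widehat{\mathcal T}_\circ=\{\widehat T\in\widehat{\mathcal T}_\bullet:\exists\widehat T'\in\widehat{\mathcal T}_\star,\widehat T\subseteq\widehat T'\}\cup\{\widehat T\in\widehat{\mathcal T}_\star:\exists\widehat T'\in\widehat{\mathcal T}_\bullet,\widehat T\subseteq\widehat T'\}$). Then $\widehat{\mathcal T}_\circ$ is admissible, finer than both $\widehat{\mathcal T}_\bullet$ and $\widehat{\mathcal T}_\star$, and $\#\widehat{\mathcal T}_\circ\le\#\widehat{\mathcal T}_\bullet+\#\widehat{\mathcal T}_\star-\#\widehat{\mathcal T}^0$.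
   Context: Parameter domain $\widehat\Omega=(0,1)^d$, $d\ge2$; degrees $p_1,\dots,p_d\ge1$. For each $i$, $\widehat{\mathcal K}^0_i$ is a $p_i$-open knot vector in $[0,1]$ (first $p_i+1$ knots $0$, last $p_i+1$ knots $1$, interior multiplicities $\le p_i$); $\widehat{\mathcal K}^{k+1}_i$ arises from $\widehat{\mathcal K}^k_i$ by inserting each nondegenerate span's midpoint once. $\widehat{\mathcal B}^k$: tensor-product B-splines of degree $(p_1,\dots,p_d)$ for $\widehat{\mathcal K}^k$; $\widehat{\mathcal T}^k$: closed cells of level $k$. A hierarchical mesh is given by closed sets $[0,1]^d=\widehat\Omega^0\supseteq\widehat\Omega^1\supseteq\cdots$, each $\widehat\Omega^k$ ($k\ge1$) a union of cells of $\widehat{\mathcal T}^{k-1}$, eventually empty; mesh $\widehat{\mathcal T}=\bigcup_k\{\widehat T\in\widehat{\mathcal T}^k:\widehat T\subseteq\widehat\Omega^k,\widehat T\not\subseteq\widehat\Omega^{k+1}\}$, ${\rm level}(\widehat T)=k$; hierarchical basis $\widehat{\mathcal H}=\bigcup_k\{\widehat\beta\in\widehat{\mathcal B}^k:{\rm supp}\,\widehat\beta\subseteq\widehat\Omega^k,{\rm supp}\,\widehat\beta\not\subseteq\widehat\Omega^{k+1}\}$. Neighbors $\mathcal N(\widehat T)=\{\widehat T'\in\widehat{\mathcal T}:\exists\widehat\beta\in\widehat{\mathcal H},\widehat T,\widehat T'\subseteq{\rm supp}\,\widehat\beta\}$; the mesh is admissible if $|{\rm level}(\widehat T)-{\rm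 level}(\widehat T')|\le1$ whenever $\widehat T'\in\mathcal N(\widehat T)$. A mesh is finer than another if each of its domains $\widehat\Omega^k$ contains the corresponding domain of the other. *)

(* Defs.v *)
From HB Require Import structures.
From mathcomp Require Import all_boot all_order all_algebra.
Set Implicit Arguments. Unset Strict Implicit. Unset Printing Implicit Defensive.
Import Order.TTheory GRing.Theory Num.Theory.
Local Open Scope ring_scope.

Section Hier.
Variable R : realFieldType.

Fixpoint refine (s : seq R) : seq R :=
  match s with
  | a :: ((b :: _) as s') =>
      if a < b then a :: (a + b) / 2%:R :: refine s' else a :: refine s'
  | _ => s
  end.

Definition open_knots (p : nat) (s : seq R) : Prop :=
  [/\ sorted <=%R s,
      take p.+1 s = nseq p.+1 0,
      drop (size s - p.+1) s = nseq p.+1 1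
    & forall x : R, 0 < x < 1 -> (count_mem x s <= p)%N].

Variable d : nat.
Variable p : 'I_d -> nat.
Variable K0 : 'I_d -> seq R.

Definition point := 'I_d -> R.
Definition pset := point -> Prop.
Definition psubset (A B : pset) : Prop := forall x, A x -> B x.

Definition knots (k : nat) (i : 'I_d) : seq R := iter k refine (K0 i).
Definition kn (k : nat) (i : 'I_d) (n : nat) : R := nth 0 (knots k i) n.

Definition is_cell (k : nat) (a : {ffun 'I_d -> nat}) : Prop :=
  forall i, ((a i).+1 < size (knots k i))%N /\ kn k i (a i) < kn k i (a i).+1.
Definition cell_set (k : nat) (a : {ffun 'I_d -> nat}) : pset :=
  fun x => forall i, kn k i (a i) <= x i <= kn k i (a i).+1.

(** Tensor-product B-splines of level k, indexed by multi-index j;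
    the B-spline beta_{j_i,p_i} has local knots t_{j_i},...,t_{j_i+p_i+1}. *)
Definition is_bspl (k : nat) (j : {ffun 'I_d -> nat}) : Prop :=
  forall i, ((j i + p i).+1 < size (knots k i))%N.
Definition supp (k : nat) (j : {ffun 'I_d -> nat}) : pset :=
  fun x => forall i, kn k i (j i) <= x i <= kn k i (j i + p i).+1.

Definition unit_cube : pset := fun x => forall i, 0 <= x i <= 1.

Definition hmesh (Om : nat -> pset) : Prop :=
  [/\ forall x, Om 0%N x <-> unit_cube x,
      forall k, psubset (Om k.+1) (Om k),
      forall k, exists S : {ffun 'I_d -> nat} -> Prop,
          (forall a, S a -> is_cell k a) /\
          (forall x, Om k.+1 x <-> exists a, S a /\ cell_set k a x)
    & exists N, forall k x, (N <= k)%N -> ~ Om k x].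

Definition mesh (Om : nat -> pset) (T : nat * {ffun 'I_d -> nat}) : Prop :=
  [/\ is_cell T.1 T.2, psubset (cell_set T.1 T.2) (Om T.1)
    & ~ psubset (cell_set T.1 T.2) (Om T.1.+1)].
Definition hbasis (Om : nat -> pset) (B : nat * {ffun 'I_d -> nat}) : Prop :=
  [/\ is_bspl B.1 B.2, psubset (supp B.1 B.2) (Om B.1)
    & ~ psubset (supp B.1 B.2) (Om B.1.+1)].
Definition level (T : nat * {ffun 'I_d -> nat}) : nat := T.1.

Definition neighbor (Om : nat -> pset) (T T' : nat * {ffun 'I_d -> nat}) : Prop :=
  mesh Om T' /\ exists B, hbasis Om B /\
     psubset (cell_set T.1 T.2) (supp B.1 B.2) /\
     psubset (cell_set T'.1 T'.2) (supp B.1 B.2).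

Definition admissible (Om : nat -> pset) : Prop :=
  forall T T', mesh Om T -> neighbor Om T T' ->
    (level T <= (level T').+1)%N /\ (level T' <= (level T).+1)%N.

Definition finer (Om1 Om2 : nat -> pset) : Prop :=
  forall k, psubset (Om2 k) (Om1 k).

Definition union_mesh (Om1 Om2 : nat -> pset) : nat -> pset :=
  fun k x => Om1 k x \/ Om2 k x.

Definition mesh0 (T : nat * {ffun 'I_d -> nat}) : Prop :=
  T.1 = 0%N /\ is_cell 0 T.2.

End Hier.

Definition has_card {X : eqType} (A : X -> Prop) (n : nat) : Prop :=
  exists s : seq X, [/\ uniq s, size s = n & forall x, x \in s <-> A x].

(* Main.v *)
Require Import Defs.
From HB Require Import structures.
From mathcomp Require Import all_boot all_order all_algebra.
From mathcomp Require Import ring lra zify.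
From Stdlib Require Import Classical ClassicalEpsilon.
Local Open Scope ring_scope.
Module Helpers.
Set Implicit Arguments. Unset Strict Implicit. Unset Printing Implicit Defensive.
Import Order.TTheory GRing.Theory Num.Theory.
Local Open Scope ring_scope.

Section OneD.
Variable R : realFieldType.
Implicit Types (s t : seq R).

Lemma le_nth t i j : sorted <=%R t -> (i <= j)%N -> (j < size t)%N ->
  nth 0 t i <= nth 0 t j.
Proof.
move=> st ij js; apply: (sorted_leq_nth le_trans lexx) => //; rewrite inE //.
exact: leq_ltn_trans ij js.
Qed.

Lemma sorted_count_down t (P : pred R) : sorted <=%R t ->
  (forall x y, x <= y -> P y -> P x) ->
  forall i, (i < size t)%N -> P (nth 0 t i) = (i < count P t)%N.
Proof.
elim: t => [|x t IH] //= st down.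
have stt : sorted <=%R t := path_sorted st.
have allx : all (fun y => x <= y) t := order_path_min le_trans st.
case Px: (P x) => /=.
  by case=> [|i] //= hi; rewrite IH.
have c0 : count P t = 0%N.
  rewrite (@eq_in_count _ _ pred0) ?count_pred0 // => y yt /=.
  apply/negbTE; apply/negP => Py.
  by move: Px; rewrite (down x y) //; move/allP: allx; apply.
rewrite c0; case=> [|i] //= hi.
apply/negbTE/negP => Py; move: Px; rewrite (down x (nth 0 t i)) //.
by move/allP: allx; apply; rewrite mem_nth.
Qed.

Lemma count_split s v w : v < w ->
  count (fun x => x < w) s = addn (count (fun x => x <= v) s) (count (fun x => (v < x) && (x < w)) s).
Proof.
move=> vw; elim: s => //= x s ->.
case: (leP x v) => hx /=.
  by rewrite (le_lt_trans hx vw) /= add0n addnA.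
by rewrite add0n addnCA.
Qed.

Lemma parent_span t t' q a :
  sorted <=%R t -> sorted <=%R t' -> (forall P, count P t <= count P t')%N ->
  ((a + q).+1 < size t')%N ->
  nth 0 t' a < nth 0 t' (a+q).+1 -> has (fun x => x <= nth 0 t' a) t ->
  (q < count (fun x => (nth 0 t' a < x)%R) t)%N ->
  exists a', [/\ ((a' + q).+1 < size t)%N, nth 0 t a' <= nth 0 t' a
               & nth 0 t' (a+q).+1 <= nth 0 t (a'+q).+1].
Proof.
move=> st st' cnt sz vw hasv cq.
set v := nth 0 t' a in vw hasv cq *; set w := nth 0 t' (a+q).+1 in vw *.
set c := count (fun x => x <= v) t.
have c1 : (0 < c)%N by rewrite /c -has_count.
have csz : (c + count (fun x => (v < x)%R) t = size t)%N.
  rewrite -(count_predC (fun x => x <= v) t); congr (_ + _)%N.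
  by apply: eq_count => x /=; rewrite ltNge.
have downv : forall x y, x <= y -> (fun x => x <= v) y -> (fun x => x <= v) x.
  by move=> x y xy /= yv; apply: le_trans xy yv.
have downw : forall x y, x <= y -> (fun x => x < w) y -> (fun x => x < w) x.
  by move=> x y xy /= yv; apply: le_lt_trans xy yv.
exists c.-1; split.
- lia.
- have := @sorted_count_down t _ st downv c.-1.
  move=> h; rewrite h; last lia.
  rewrite prednK //; exact: leqnn.
- have -> : (c.-1 + q).+1 = (c + q)%N by lia.
  rewrite leNgt; apply/negP => hlt.
  have h1 : (c + q < count (fun x => (x < w)%R) t)%N.
    rewrite -(@sorted_count_down t _ st downw) //; lia.
  have h2 : (count (fun x => (x < w)%R) t' <= (a + q).+1)%N.
    have := @sorted_count_down t' _ st' downw (a+q).+1 sz.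
    by rewrite ltxx => /esym/negbT; rewrite -leqNgt.
  have h3 : (a < count (fun x => (x <= v)%R) t')%N.
    by rewrite -(@sorted_count_down t' _ st' downv) //; lia.
  move: h1 h2 h3; rewrite !(count_split _ vw) -/c.
  move=> h1 h2 h3.
  have h4 := cnt (fun x => (v < x) && (x < w)).
  move: h1 h2 h3 h4; set X := count _ t; set Y := count _ t'; set Z := count _ t'.
  lia.
Qed.

Lemma cover_span t a b y : sorted <=%R t -> (b < size t)%N -> (a < b)%N ->
  nth 0 t a < nth 0 t b -> nth 0 t a <= y <= nth 0 t b ->
  exists n, [/\ (a <= n < b)%N, nth 0 t n < nth 0 t n.+1 & nth 0 t n <= y <= nth 0 t n.+1].
Proof.
move=> st; elim: b => [|b IH] // bs ab hab /andP[ay yb].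
have bb : nth 0 t b <= nth 0 t b.+1 by apply: le_nth.
case: (ltngtP a b) => [ab'|ba|eab]; [|lia|]; last first.
  by exists b; rewrite -eab in hab ay yb *; split => //; rewrite ?leqnn ?ay ?yb // eab.
have ex : forall n, (a <= n < b)%N -> (a <= n < b.+1)%N by move=> n; lia.
case: (leP (nth 0 t b) y) => hy.
  case: (ltP (nth 0 t b) (nth 0 t b.+1)) => hb.
    by exists b; split => //; [lia | rewrite hy].
  have eb : nth 0 t b = nth 0 t b.+1 by apply/eqP; rewrite eq_le hb bb.
  have h1 : nth 0 t a < nth 0 t b by rewrite eb.
  have h2 : nth 0 t a <= y <= nth 0 t b by rewrite ay eb.
  have [n [? ? ?]] := IH (ltnW bs) ab' h1 h2.
  by exists n; split => //; apply: ex.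
have ha : nth 0 t a < nth 0 t b by apply: le_lt_trans ay hy.
have h2 : nth 0 t a <= y <= nth 0 t b by rewrite ay ltW.
have [n [? ? ?]] := IH (ltnW bs) ab' ha h2.
by exists n; split => //; apply: ex.
Qed.

Lemma span_uniq t m n x : sorted <=%R t -> (m.+1 < size t)%N -> (n.+1 < size t)%N ->
  nth 0 t n < x < nth 0 t n.+1 -> nth 0 t m <= x <= nth 0 t m.+1 -> m = n.
Proof.
move=> st ms ns /andP[h1 h2] /andP[h3 h4].
case: (ltngtP m n) => // hmn.
  have h := le_nth st hmn (ltnW ns).
  by have := lt_le_trans (le_lt_trans h h1) h4; rewrite ltxx.
have := le_nth st hmn (ltnW ms); move=> h.
by have := lt_le_trans h2 (le_trans h h3); rewrite ltxx.
Qed.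

Lemma child_span t t' n : sorted <=%R t -> sorted <=%R t' -> {subset t <= t'} ->
  (n.+1 < size t)%N -> nth 0 t n < nth 0 t n.+1 ->
  exists u, [/\ (u.+1 < size t')%N, nth 0 t' u < nth 0 t' u.+1,
     nth 0 t n <= nth 0 t' u & nth 0 t' u.+1 <= nth 0 t n.+1].
Proof.
move=> st st' sub ns hn.
have m1 : nth 0 t n \in t' by apply: sub; rewrite mem_nth // ltnW.
have m2 : nth 0 t n.+1 \in t' by apply: sub; rewrite mem_nth.
set i1 := index (nth 0 t n) t'; set i2 := index (nth 0 t n.+1) t'.
have i1s : (i1 < size t')%N by rewrite index_mem.
have i2s : (i2 < size t')%N by rewrite index_mem.
have e1 : nth 0 t' i1 = nth 0 t n by rewrite nth_index.
have e2 : nth 0 t' i2 = nth 0 t n.+1 by rewrite nth_index.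
have i12 : (i1 < i2)%N.
  rewrite ltnNge; apply/negP => h; have := le_nth st' h i1s.
  by rewrite e1 e2 leNgt hn.
have hh1 : nth 0 t' i1 < nth 0 t' i2 by rewrite e1 e2.
have hh2 : nth 0 t' i1 <= nth 0 t' i1 <= nth 0 t' i2 by rewrite lexx e1 e2 ltW.
have [u [/andP[h1 h2] h3 h4]] := cover_span st' i2s i12 hh1 hh2.
exists u; split => //; first lia.
  by rewrite -e1; apply: le_nth => //; lia.
by rewrite -e2; apply: le_nth => //; lia.
Qed.

Lemma refine_cons2 a b s : refine [:: a, b & s] =
  if a < b then [:: a, (a + b) / 2%:R & refine (b :: s)] else a :: refine (b :: s).
Proof. by []. Qed.

Lemma refine_subseq s : subseq s (refine s).
Proof.
elim: s => [|a s IH] //; case: s IH => [|b s'] IH; first by rewrite /= eqxx.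
rewrite refine_cons2; case: ifP => _; rewrite /= eqxx //.
by apply: subseq_trans IH (subseq_cons _ _).
Qed.

Lemma refine_path s x : path <=%R x s -> path <=%R x (refine s).
Proof.
elim: s x => [|a s IH] x //; case: s IH => [|b s'] IH //.
rewrite refine_cons2 => /= /andP[xa /andP[ab pb]].
case: ifP => hab /=.
  have [m1 m2] := midf_le ab.
  rewrite xa m1 /=; apply: IH => /=; by rewrite m2.
by rewrite xa /=; apply: IH => /=; rewrite ab.
Qed.

Lemma refine_sorted s : sorted <=%R s -> sorted <=%R (refine s).
Proof.
case: s => [|a s] // h; apply: (@path_sorted _ _ a); apply: refine_path.
by rewrite /= lexx.
Qed.

Lemma refine_all s : all (fun x => 0 <= x <= 1) s -> all (fun x => 0 <= x <= 1) (refine s).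
Proof.
elim: s => [|a s IH] //; case: s IH => [|b s'] IH //.
rewrite refine_cons2 => /= /andP[ha hb].
have IH' := IH hb; move: hb => /= /andP[hb _].
case: ifP => hab /=; rewrite ha //= IH' andbT.
move: ha hb => /andP[a0 a1] /andP[b0 b1].
have [m1 m2] := midf_le (ltW hab).
by rewrite (le_trans a0 m1) (le_trans m2 b1).
Qed.

Definition KG (q : nat) (t : seq R) :=
  [/\ sorted <=%R t, all (fun x => 0 <= x <= 1) t, 0 \in t & (q.+1 <= count_mem (1%R:R) t)%N].

Lemma KG_refine q t : KG q t -> KG q (refine t).
Proof.
case=> h1 h2 h3 h4; split.
- exact: refine_sorted.
- exact: refine_all.
- exact: (mem_subseq (refine_subseq t)).
- by apply: leq_trans h4 _; apply: leq_count_subseq; apply: refine_subseq.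
Qed.

Lemma KG_open q t : open_knots q t -> KG q t.
Proof.
case=> st ht hd _.
have szd : size (drop (size t - q.+1) t) = q.+1 by rewrite hd size_nseq.
have szt : (q.+1 <= size t)%N by move: szd; rewrite size_drop; lia.
have n0 : nth 0 t 0 = 0.
  by rewrite -(nth_take 0 (n0 := q.+1)) // ht nth_nseq.
have n1 : nth 0 t (size t).-1 = 1.
  have := nth_drop (size t - q.+1) 0 t q; rewrite hd nth_nseq ltnSn.
  by have -> : (size t - q.+1 + q = (size t).-1)%N by lia.
split => //.
- apply/allP => x xt; rewrite -(nth_index 0 xt).
  have ix : (index x t < size t)%N by rewrite index_mem.
  have h1 := le_nth st (leq0n (index x t)) ix; rewrite n0 in h1.
  have h2 := @le_nth t (index x t) (size t).-1 st ltac:(lia) ltac:(lia); rewrite n1 in h2.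
  by rewrite h1 h2.
- have : 0 \in take q.+1 t by rewrite ht mem_nseq ?eqxx ?andbT.
  exact: mem_take.
- rewrite -(cat_take_drop (size t - q.+1) t) count_cat hd count_nseq /= eqxx.
  lia.
Qed.

End OneD.

Section Multi.
Variable R : realFieldType.
Variable d : nat.
Variable p : 'I_d -> nat.
Variable K0 : 'I_d -> seq R.
Hypothesis hK : forall i, open_knots (p i) (K0 i).

Local Notation kn := (kn K0).
Local Notation knots := (knots K0).
Local Notation cell := (cell_set K0).
Local Notation point := (point R d).

Lemma knotsS k i : knots k.+1 i = refine (knots k i).
Proof. by rewrite /Defs.knots iterS. Qed.

Lemma KGk k i : KG (p i) (knots k i).
Proof.
elim: k => [|k IH]; first exact: KG_open (hK i).
rewrite knotsS; exact: KG_refine.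
Qed.

Lemma kn_sorted k i : sorted <=%R (knots k i).
Proof. by case: (KGk k i). Qed.

Lemma kn_le k i m n : (m <= n)%N -> (n < size (knots k i))%N -> kn k i m <= kn k i n.
Proof. by move=> mn ns; apply: le_nth => //; apply: kn_sorted. Qed.

Lemma kn_01 k i n : (n < size (knots k i))%N -> 0 <= kn k i n <= 1.
Proof.
move=> ns; case: (KGk k i) => _ /allP h _ _; apply: h; exact: mem_nth.
Qed.

Definition inside k (a : {ffun 'I_d -> nat}) (x : point) :=
  forall i, kn k i (a i) < x i < kn k i (a i).+1.
Definition ctr k (a : {ffun 'I_d -> nat}) : point :=
  fun i => (kn k i (a i) + kn k i (a i).+1) / 2.

Lemma ctr_inside k a : is_cell K0 k a -> inside k a (ctr k a).
Proof. move=> c i; have [_ h] := c i; have [h1 h2] := midf_lt h; by rewrite h1 h2. Qed.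

Lemma inside_cell k a x : inside k a x -> cell k a x.
Proof. by move=> h i; have /andP[h1 h2] := h i; rewrite !ltW. Qed.

Lemma corner_lo k a : is_cell K0 k a -> cell k a (fun i => kn k i (a i)).
Proof. by move=> c i; have [_ h] := c i; rewrite lexx ltW. Qed.

Lemma corner_hi k a : is_cell K0 k a -> cell k a (fun i => kn k i (a i).+1).
Proof. by move=> c i; have [_ h] := c i; rewrite lexx ltW. Qed.

Lemma sub_bounds k a l b : is_cell K0 k a -> psubset (cell k a) (cell l b) ->
  forall i, kn l i (b i) <= kn k i (a i) /\ kn k i (a i).+1 <= kn l i (b i).+1.
Proof.
move=> c s i; have /andP[h1 _] := s _ (corner_lo c) i.
by have /andP[_ h2] := s _ (corner_hi c) i.
Qed.

Lemma sub_inside k a l b x : is_cell K0 k a -> psubset (cell k a) (cell l b) ->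
  inside k a x -> inside l b x.
Proof.
move=> c s h i; have [h1 h2] := sub_bounds c s i; have /andP[h3 h4] := h i.
by rewrite (le_lt_trans h1 h3) (lt_le_trans h4 h2).
Qed.

Lemma cell_uniq k a b x : is_cell K0 k a -> is_cell K0 k b -> inside k a x ->
  cell k b x -> a = b.
Proof.
move=> ca cb ia xb; apply/ffunP => i; apply/esym.
have [h1 _] := ca i; have [h2 _] := cb i.
exact: (span_uniq (kn_sorted k i) h2 h1 (ia i) (xb i)).
Qed.

Lemma in_Om_sub Om k a x : hmesh K0 Om -> is_cell K0 k a -> inside k a x ->
  Om k.+1 x -> psubset (cell k a) (Om k.+1).
Proof.
case=> _ _ hS _ ca ia Ox.
have [S [S1 S2]] := hS k.
have [b [Sb xb]] := (S2 x).1 Ox.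
have eab := cell_uniq ca (S1 b Sb) ia xb; subst b.
by move=> y ya; apply/(S2 y); exists a.
Qed.

Lemma Om_mono Om k l : hmesh K0 Om -> (k <= l)%N -> psubset (Om l) (Om k).
Proof.
case=> _ hm _ _; elim: l => [|l IH] kl.
  by have -> : k = 0%N by lia.
case: (leqP k l) => h.
  by move=> x Ox; apply: (IH h); apply: hm Ox.
by have -> : k = l.+1 by lia.
Qed.

Lemma cell_lvl Om N k l a : (forall k x, (N <= k)%N -> ~ Om k x) ->
  is_cell K0 k a -> psubset (cell k a) (Om l) -> (l < N)%N.
Proof.
move=> hN ca s; rewrite ltnNge; apply/negP => Nl.
exact: hN _ _ Nl (s _ (corner_lo ca)).
Qed.

Lemma par1 k i a q : (q <= p i)%N -> ((a + q).+1 < size (knots k.+1 i))%N ->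
  kn k.+1 i a < kn k.+1 i (a + q).+1 ->
  exists a', [/\ ((a' + q).+1 < size (knots k i))%N, kn k i a' <= kn k.+1 i a
               & kn k.+1 i (a+q).+1 <= kn k i (a'+q).+1].
Proof.
move=> qp sz vw.
have [s1 a1 z1 c1] := KGk k i.
have [s2 a2 _ _] := KGk k.+1 i.
rewrite /Defs.kn knotsS in sz vw *; rewrite knotsS in s2 a2.
apply: parent_span => //.
- by move=> P; apply: leq_count_subseq; apply: refine_subseq.
- apply/hasP; exists 0 => //.
  have /allP h := a2; have /andP[h0 _] := h _ (mem_nth 0 (ltac:(lia) : (a < size (refine (knots k i)))%N)).
  exact: h0.
- have hw : nth 0 (refine (knots k i)) (a + q).+1 <= 1.
    by have /allP h := a2; have /andP[_ ->] := h _ (mem_nth 0 sz).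
  have hc : (count_mem (1%R:R) (knots k i) <=
     count (fun x => (nth 0 (refine (knots k i)) a < x)%R) (knots k i))%N.
    by apply: sub_count => x /= /eqP ->; exact: lt_le_trans vw hw.
  by apply: leq_trans hc; apply: leq_ltn_trans c1.
Qed.

Lemma parent_cell k a : is_cell K0 k.+1 a ->
  exists b, is_cell K0 k b /\ psubset (cell k.+1 a) (cell k b).
Proof.
move=> ca.
have : forall i, exists n : nat, [/\ (n.+1 < size (knots k i))%N, kn k i n <= kn k.+1 i (a i)
               & kn k.+1 i (a i).+1 <= kn k i n.+1].
  move=> i; have [h1 h2] := ca i.
  have [n [e1 e2 e3]] := @par1 k i (a i) 0 (leq0n _) ltac:(by rewrite addn0) ltac:(by rewrite addn0).
  by exists n; rewrite !addn0 in e1 e2 e3 *.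
case/fin_all_exists => f hf.
exists [ffun i => f i]; split.
  move=> i; rewrite ffunE; have [h1 h2 h3] := hf i; split => //.
  have [_ h] := ca i; exact: le_lt_trans h2 (lt_le_trans h h3).
move=> x xa i; rewrite ffunE; have [_ h2 h3] := hf i; have /andP[x1 x2] := xa i.
by rewrite (le_trans h2 x1) (le_trans x2 h3).
Qed.

Lemma child_cell k a : is_cell K0 k a ->
  exists b, is_cell K0 k.+1 b /\ psubset (cell k.+1 b) (cell k a).
Proof.
move=> ca.
have : forall i, exists u : nat, [/\ (u.+1 < size (knots k.+1 i))%N,
     kn k.+1 i u < kn k.+1 i u.+1, kn k i (a i) <= kn k.+1 i u & kn k.+1 i u.+1 <= kn k i (a i).+1].
  move=> i; have [h1 h2] := ca i.
  rewrite /Defs.kn knotsS; apply: child_span => //.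
  - exact: kn_sorted.
  - by rewrite -knotsS; apply: kn_sorted.
  - by move=> x; apply: mem_subseq; apply: refine_subseq.
case/fin_all_exists => f hf.
exists [ffun i => f i]; split.
  by move=> i; rewrite ffunE; have [h1 h2 h3 h4] := hf i.
move=> x xa i; have := xa i; rewrite ffunE; have [_ _ h3 h4] := hf i; case/andP => x1 x2.
by rewrite (le_trans h3 x1) (le_trans x2 h4).
Qed.

Local Notation supp := (supp p K0).

Definition nondeg k (g : {ffun 'I_d -> nat}) :=
  forall i, kn k i (g i) < kn k i (g i + p i).+1.

Lemma supp_lo k g : nondeg k g -> supp k g (fun i => kn k i (g i)).
Proof. by move=> h i; rewrite lexx ltW. Qed.
Lemma supp_hi k g : nondeg k g -> supp k g (fun i => kn k i (g i + p i).+1).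
Proof. by move=> h i; rewrite lexx ltW. Qed.

Lemma nondeg_cell l a k g : is_cell K0 l a -> psubset (cell l a) (supp k g) -> nondeg k g.
Proof.
move=> ca s i; have /andP[h1 _] := s _ (corner_lo ca) i.
have /andP[_ h2] := s _ (corner_hi ca) i.
have [_ h] := ca i; exact: le_lt_trans h1 (lt_le_trans h h2).
Qed.

Lemma nondeg_sub k g k' g' : nondeg k g -> psubset (supp k g) (supp k' g') -> nondeg k' g'.
Proof.
move=> nd s i; have /andP[h1 _] := s _ (supp_lo nd) i.
have /andP[_ h2] := s _ (supp_hi nd) i.
exact: le_lt_trans h1 (lt_le_trans (nd i) h2).
Qed.

Lemma supp_cube k g : is_bspl p K0 k g -> psubset (supp k g) (unit_cube (d:=d)).
Proof.
move=> b x xs i; have /andP[h1 h2] := xs i.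
have /andP[l0 _] := kn_01 (ltac:(have := b i; lia) : (g i < size (knots k i))%N).
have /andP[_ u1] := kn_01 (b i).
by rewrite (le_trans l0 h1) (le_trans h2 u1).
Qed.

Lemma parent_bspl k g : is_bspl p K0 k.+1 g -> nondeg k.+1 g ->
  exists g', is_bspl p K0 k g' /\ psubset (supp k.+1 g) (supp k g').
Proof.
move=> bg nd.
have : forall i, exists n : nat, [/\ ((n + p i).+1 < size (knots k i))%N,
   kn k i n <= kn k.+1 i (g i) & kn k.+1 i (g i + p i).+1 <= kn k i (n + p i).+1].
  by move=> i; apply: par1; [exact: leqnn | exact: bg | exact: nd].
case/fin_all_exists => f hf.
exists [ffun i => f i]; split.
  by move=> i; rewrite ffunE; have [] := hf i.
move=> x xa i; have := xa i; rewrite ffunE; have [_ h2 h3] := hf i; case/andP => x1 x2.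
by rewrite (le_trans h2 x1) (le_trans x2 h3).
Qed.

Lemma bspl_cell k g y : is_bspl p K0 k g -> nondeg k g -> supp k g y ->
  exists a, [/\ is_cell K0 k a, cell k a y & psubset (cell k a) (supp k g)].
Proof.
move=> bg nd ys.
have : forall i, exists n : nat, [/\ (g i <= n < (g i + p i).+1)%N,
   kn k i n < kn k i n.+1 & kn k i n <= y i <= kn k i n.+1].
  move=> i; apply: cover_span; [exact: kn_sorted | exact: bg | lia | exact: nd | exact: ys].
case/fin_all_exists => f hf.
exists [ffun i => f i]; split.
- by move=> i; rewrite ffunE; have [h1 h2 _] := hf i; split => //; have := bg i; lia.
- by move=> i; rewrite ffunE; have [] := hf i.
- move=> x xa i; have := xa i; rewrite ffunE; have [h1 _ _] := hf i; case/andP => x1 x2.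
  have [/andP[e1 e2] _ _] := hf i.
  rewrite (le_trans _ x1) ?(le_trans x2) //; apply: kn_le => //; try lia; have := bg i; lia.
Qed.

Lemma climb Om j g : hmesh K0 Om -> is_bspl p K0 j g -> nondeg j g ->
  ~ psubset (supp j g) (Om j.+1) ->
  exists j' g', [/\ (j' <= j)%N, hbasis p K0 Om (j', g') & psubset (supp j g) (supp j' g')].
Proof.
move=> hm; elim: j g => [|j IH] g bg nd ns.
  case: (classic (psubset (supp 0 g) (Om 0%N))) => h.
    by exists 0%N, g; split => //; split.
  case: hm => h0 _ _ _; case: h => x xs; apply/h0; exact: supp_cube xs.
case: (classic (psubset (supp j.+1 g) (Om j.+1))) => h.
  by exists j.+1, g; split => //; split.
have [g' [bg' sg']] := parent_bspl bg nd.
have nd' := nondeg_sub nd sg'.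
have ns' : ~ psubset (supp j g') (Om j.+1) by move=> hs; apply: h => x /sg' /hs.
have [j' [g'' [h1 h2 h3]]] := IH g' bg' nd' ns'.
exists j', g''; split => //; first lia.
by move=> x /sg' /h3.
Qed.

Lemma descend Om m a : hmesh K0 Om -> is_cell K0 m a -> psubset (cell m a) (Om m) ->
  exists m' b, [/\ (m <= m')%N, mesh K0 Om (m', b) & psubset (cell m' b) (cell m a)].
Proof.
move=> hm; case: (hm) => _ _ _ [N hN].
suff : forall n m a, (N <= m + n)%N -> is_cell K0 m a -> psubset (cell m a) (Om m) ->
  exists m' b, [/\ (m <= m')%N, mesh K0 Om (m', b) & psubset (cell m' b) (cell m a)].
  by move=> H; apply: (H N) => //; lia.
elim=> [|n IH] {}m {}a hn ca s.
  by case: (hN m _ ltac:(lia) (s _ (corner_lo ca))).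
case: (classic (psubset (cell m a) (Om m.+1))) => h.
  have [b [cb sb]] := child_cell ca.
  have [m' [b' [h1 h2 h3]]] := IH m.+1 b ltac:(lia) cb (fun x xb => h x (sb x xb)).
  by exists m', b'; split => //; [lia | move=> x /h3 /sb].
by exists m, a; split.
Qed.

Lemma core Om k g l a : hmesh K0 Om -> admissible p K0 Om -> is_bspl p K0 k g ->
  nondeg k g -> ~ psubset (supp k g) (Om k.+1) -> (k.+2 <= l)%N ->
  is_cell K0 l a -> psubset (cell l a) (supp k g) -> Om l (ctr l a) -> False.
Proof.
move=> hm adm bg nd ns kl ca sa Oc.
case: l kl ca sa Oc => [|l0] // kl ca sa Oc.
have [P [cP sP]] := parent_cell ca.
have iP := sub_inside ca sP (ctr_inside ca).
have sPO := in_Om_sub hm cP iP Oc.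
have [m [b [h1 h2 h3]]] := descend hm ca (fun x xa => sPO x (sP x xa)).
have [j' [g' [h4 h5 h6]]] := climb hm bg nd ns.
case: (h5) => bg' s1 s2.
have [y [ys yn]] : exists y, supp j' g' y /\ ~ Om j'.+1 y.
  apply: NNPP => hn; apply: s2 => y ys; apply: NNPP => hy; apply: hn; by exists y.
have [a' [ca' ya' sa']] := bspl_cell bg' (nondeg_sub nd h6) ys.
have mE' : mesh K0 Om (j', a').
  split => //; first by move=> x /sa' /s1.
  by move=> hs; apply: yn; apply: hs.
have := adm (j', a') (m, b) mE'.
case.
  split => //; exists (j', g'); split => //; split => //.
  by move=> x /h3 /sa /h6.
rewrite /level /= => _ e2; lia.
Qed.

Definition Omu (Om1 Om2 : nat -> pset R d) := union_mesh Om1 Om2.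

Lemma union_hmesh Om1 Om2 : hmesh K0 Om1 -> hmesh K0 Om2 -> hmesh K0 (union_mesh Om1 Om2).
Proof.
case=> a1 b1 c1 [N1 d1] [a2 b2 c2 [N2 d2]]; split.
- move=> x; split; first by case; [move/a1 | move/a2].
  by move=> h; left; apply/a1.
- by move=> k x [h|h]; [left; apply: b1 | right; apply: b2].
- move=> k; have [S1 [e1 f1]] := c1 k; have [S2 [e2 f2]] := c2 k.
  exists (fun a => S1 a \/ S2 a); split; first by move=> a [/e1|/e2].
  move=> x; split.
    case=> [/f1 [a [? ?]]|/f2 [a [? ?]]]; exists a; split; by [left|right|].
  by case=> a [[h|h] xa]; [left; apply/f1 | right; apply/f2]; exists a.
- exists (N1 + N2)%N => k x kN [h|h]; [apply: (d1 k x) | apply: (d2 k x)] => //; lia.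
Qed.

Lemma lvl_bound Om1 Om2 l a k g : hmesh K0 Om1 -> hmesh K0 Om2 ->
  admissible p K0 Om1 -> admissible p K0 Om2 ->
  mesh K0 (union_mesh Om1 Om2) (l, a) -> hbasis p K0 (union_mesh Om1 Om2) (k, g) ->
  psubset (cell l a) (supp k g) -> (k <= l <= k.+1)%N.
Proof.
move=> hm1 hm2 ad1 ad2 [ca s1 s2] [bg t1 t2] sa /=.
have hu := union_hmesh hm1 hm2.
have nd := nondeg_cell ca sa.
apply/andP; split.
  rewrite leqNgt; apply/negP => lk; apply: s2 => x /sa /t1.
  by apply: (Om_mono hu lk).
rewrite leqNgt; apply/negP => kl.
have := s1 _ (inside_cell (ctr_inside ca)); case => hc.
  apply: (core hm1 ad1 bg nd _ kl ca sa hc) => hs; apply: t2 => x /hs; by left.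
apply: (core hm2 ad2 bg nd _ kl ca sa hc) => hs; apply: t2 => x /hs; by right.
Qed.

Lemma union_adm Om1 Om2 : hmesh K0 Om1 -> hmesh K0 Om2 ->
  admissible p K0 Om1 -> admissible p K0 Om2 -> admissible p K0 (union_mesh Om1 Om2).
Proof.
move=> hm1 hm2 ad1 ad2 [l a] [l' a'] mT [mT' [[k g] [hB [sT sT']]]].
have := lvl_bound hm1 hm2 ad1 ad2 mT hB sT.
have := lvl_bound hm1 hm2 ad1 ad2 mT' hB sT'.
rewrite /level /=; lia.
Qed.

End Multi.

Definition bo (P : Prop) : bool := if excluded_middle_informative P then true else false.
Lemma boP P : reflect P (bo P).
Proof. rewrite /bo; case: excluded_middle_informative => h; by constructor. Qed.

Lemma count_sum (T : Type) (a : pred T) s : count a s = (\sum_(x <- s) a x)%N.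
Proof. by elim: s => [|x s IH]; rewrite ?big_nil ?big_cons //= IH. Qed.

Lemma card_count (X : eqType) (P : X -> Prop) (s : seq X) : uniq s ->
  (forall x, P x -> x \in s) -> has_card P (count (fun x => bo (P x)) s).
Proof.
move=> us hs; exists (filter (fun x => bo (P x)) s); split.
- exact: filter_uniq.
- by rewrite size_filter.
- move=> x; rewrite mem_filter; split; first by case/andP => /boP.
  by move=> Px; rewrite (hs _ Px) andbT; apply/boP.
Qed.

Lemma card_uniq (X : eqType) (P : X -> Prop) (s : seq X) n : uniq s ->
  (forall x, P x -> x \in s) -> has_card P n -> n = count (fun x => bo (P x)) s.
Proof.
move=> us hs [s' [u' <- hs']]; rewrite -size_filter; apply: perm_size.
apply: uniq_perm => //; first exact: filter_uniq.
move=> x; rewrite mem_filter; apply/idP/idP.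
  by move/hs' => Px; rewrite (hs _ Px) andbT; apply/boP.
by case/andP => /boP /hs'.
Qed.

Section Count.
Variable R : realFieldType.
Variable d : nat.
Variable p : 'I_d -> nat.
Variable K0 : 'I_d -> seq R.
Hypothesis hK : forall i, open_knots (p i) (K0 i).

Local Notation kn := (kn K0).
Local Notation knots := (knots K0).
Local Notation cell := (cell_set K0).
Local Notation X := (nat * {ffun 'I_d -> nat})%type.

Definition Mk k := (\max_(i < d) size (knots k i))%N.
Definition FF k : seq {ffun 'I_d -> nat} :=
  [seq [ffun i => nat_of_ord (f i)] | f : {ffun 'I_d -> 'I_(Mk k)} <- enum {ffun 'I_d -> 'I_(Mk k)}].
Definition U N : seq X := undup [seq (k, a) | k <- iota 0 N, a <- FF k].

Lemma U_uniq N : uniq (U N). Proof. exact: undup_uniq. Qed.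

Lemma memU N k a : (k < N)%N -> is_cell K0 k a -> (k, a) \in U N.
Proof.
move=> kN ca; rewrite mem_undup.
have h : forall i, (a i < Mk k)%N.
  move=> i; have [h1 _] := ca i; apply: leq_trans (ltnW h1) _.
  exact: (leq_bigmax (F := fun i => size (knots k i))).
pose g := [ffun i => Ordinal (h i)].
have -> : a = [ffun i => nat_of_ord (g i)] by apply/ffunP => i; rewrite !ffunE.
apply/flattenP; exists [seq (k, b) | b <- FF k]; first by apply: map_f; rewrite mem_iota.
by apply: map_f; apply: map_f; rewrite mem_enum.
Qed.

Local Open Scope nat_scope.

Definition A Om (u : X) := is_cell K0 u.1 u.2 /\ psubset (cell u.1 u.2) (Om u.1).
Definition Rf Om (u : X) := is_cell K0 u.1 u.2 /\ psubset (cell u.1 u.2) (Om u.1.+1).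
Definition chld (D u : X) :=
  [/\ D.1 = u.1.+1, is_cell K0 D.1 D.2 & psubset (cell D.1 D.2) (cell u.1 u.2)].
Definition ch N (u : X) := count (fun D => bo (chld D u)) (U N).

Lemma count_add (T : Type) (a b c : pred T) s :
  (forall x, a x + b x = c x) -> count a s + count b s = count c s.
Proof. by move=> h; elim: s => //= x s <-; rewrite -(h x); lia. Qed.

Lemma chld_uniq D u u' : chld D u -> chld D u' -> is_cell K0 u.1 u.2 -> is_cell K0 u'.1 u'.2 -> u = u'.
Proof.
case: u u' => [k a] [k' a'] [/= e1 c1 s1] [/= e2 c2 s2] ca ca'.
have ek : k = k' by rewrite e1 in e2; case: e2.
subst k'.
have i1 := sub_inside c1 s1 (ctr_inside c1).
have i2 := sub_inside c2 s2 (ctr_inside c2).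
by rewrite (cell_uniq hK ca ca' i1 (inside_cell i2)).
Qed.

Lemma mesh_count Om N : hmesh K0 Om -> (forall k x, N <= k -> ~ Om k x) ->
  count (fun u => bo (mesh K0 Om u)) (U N) =
  count (fun u => bo (mesh0 K0 u)) (U N) + \sum_(u <- U N) bo (Rf Om u) * (ch N u).-1.
Proof.
move=> hm hN.
have hm' := hm; case: hm' => h0 hmono _ _.
have s1 : count (fun u => bo (mesh K0 Om u)) (U N) + count (fun u => bo (Rf Om u)) (U N)
          = count (fun u => bo (A Om u)) (U N).
  apply: count_add => [[k a]].
  case: (boP (Rf Om (k, a))) => [[ca sa]|nr].
    case: (boP (mesh K0 Om (k, a))) => [[_ _ []] //|_].
    case: (boP (A Om (k, a))) => // [[]]; split => // x /sa; apply: hmono.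
  case: (boP (mesh K0 Om (k, a))) => [[c1 c2 c3]|nm].
    by case: (boP (A Om (k, a))) => // [[]].
  case: (boP (A Om (k, a))) => // [[c1 c2]].
  by case: nm; split => // hs; apply: nr; split.
have s2 : count (fun u => bo (A Om u)) (U N) = count (fun u => bo (mesh0 K0 u)) (U N) +
    count (fun u => bo (A Om u /\ 0 < u.1)) (U N).
  symmetry; apply: count_add => [[k a]].
  case: k => [|k] /=.
    case: (boP (A Om (0, a))) => [[c1 c2]|na].
      case: (boP (mesh0 K0 (0, a))) => [_|[]]; last by split.
      by case: (boP (_ /\ _)) => // [[_]].
    case: (boP (mesh0 K0 (0, a))) => [[_ ca]|_]; last by case: (boP (_ /\ _)) => // [[]].
    case: na; split => // x xa; apply/h0 => i; have /andP[x1 x2] := xa i.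
    have [l _] := ca i.
    have /andP[z0 _] := kn_01 hK (ltnW l).
    have /andP[_ z1] := kn_01 hK l.
    by rewrite (le_trans z0 x1) (le_trans x2 z1).
  case: (boP (mesh0 K0 (k.+1, a))) => [[] //|_].
  case: (boP (A Om (k.+1, a))) => [h|h]; case: (boP (_ /\ _)) => // [[]] //.
have s3 : forall D, D \in U N ->
    \sum_(u <- U N) bo (Rf Om u) * bo (chld D u) = bo (A Om D /\ 0 < D.1).
  move=> D DU.
  case: (boP (A Om D /\ 0 < D.1)) => [[[cD sD] lD]|nD]; last first.
    rewrite big1_seq // => u _; rewrite mulnb.
    case: (boP (Rf Om u)) => [[cu su]|]; last by [].
    case: (boP (chld D u)) => [[e1 c1 t1]|]; last by [].
    by case: nD; split; [split => // x /t1 /su; rewrite e1 | rewrite e1].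
  case: D DU cD sD lD => [[|k] a] // DU cD sD _.
  have [P [cP sP]] := parent_cell hK cD.
  have iP := sub_inside cD sP (ctr_inside cD).
  have sPO := in_Om_sub hK hm cP iP (sD _ (inside_cell (ctr_inside cD))).
  have u0U : (k, P) \in U N.
    by apply: memU => //; have := cell_lvl hN cP sPO; lia.
  rewrite (eq_big_seq (fun u => (u == (k, P)) : nat)).
    by rewrite -count_sum count_uniq_mem ?u0U // U_uniq.
  move=> u uU; rewrite mulnb.
  case: (boP (Rf Om u)) => [[cu su]|nu]; case: (boP (chld (k.+1, a) u)) => [hc|nc] /=.
  - have hc0 : chld (k.+1, a) (k, P) by split.
    by rewrite (chld_uniq hc hc0 cu cP) eqxx.
  - case: eqP => // eu; subst u; case: nc; by split.
  - case: eqP => // eu; subst u; case: nu; by split.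
  - case: eqP => // eu; subst u; case: nc; by split.
have s4 : \sum_(u <- U N) bo (Rf Om u) * ch N u = count (fun u => bo (A Om u /\ 0 < u.1)) (U N).
  rewrite count_sum.
  rewrite (eq_big_seq (fun u => \sum_(D <- U N) bo (Rf Om u) * bo (chld D u))); last first.
    by move=> u _; rewrite /ch count_sum big_distrr.
  rewrite exchange_big /=; apply: eq_big_seq => D DU; exact: s3.
have s5 : \sum_(u <- U N) bo (Rf Om u) * ch N u =
    count (fun u => bo (Rf Om u)) (U N) + \sum_(u <- U N) bo (Rf Om u) * (ch N u).-1.
  rewrite count_sum -big_split /=; apply: eq_big_seq => u uU.
  case: (boP (Rf Om u)) => [[cu su]|]; last by [].
  suff : 0 < ch N u by rewrite !mul1n; lia.
  have [b [cb sb]] := child_cell hK cu.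
  rewrite /ch -has_count; apply/hasP; exists (u.1.+1, b).
    apply: memU => //; exact: cell_lvl hN cu su.
  by apply/boP; split.
move: s1; rewrite s2 -s4 s5; lia.
Qed.

End Count.

End Helpers.
Import Helpers.

Theorem mainTheorem10 (R : realFieldType) (d : nat) (hd : (2 <= d)%N)
  (p : 'I_d -> nat) (hp : forall i, (1 <= p i)%N)
  (K0 : 'I_d -> seq R) (hK : forall i, open_knots (p i) (K0 i))
  (Omb Oms : nat -> pset R d) :
  hmesh K0 Omb -> hmesh K0 Oms ->
  admissible p K0 Omb -> admissible p K0 Oms ->
  let Omc := union_mesh Omb Oms in
  [/\ hmesh K0 Omc, admissible p K0 Omc, finer Omc Omb, finer Omc Oms
    & forall nb ns n0 : nat,
        has_card (mesh K0 Omb) nb -> has_card (mesh K0 Oms) ns ->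
        has_card (mesh0 K0) n0 ->
        exists nc : nat, has_card (mesh K0 Omc) nc /\ (nc + n0 <= nb + ns)%N].
Proof.
move=> hb hs ab as_ Omc.
have hc : hmesh K0 Omc := union_hmesh hb hs.
split.
- exact: hc.
- exact: (union_adm hK hb hs ab as_).
- by move=> k x h; left.
- by move=> k x h; right.
move=> nb ns n0 cb cs c0.
have [Nb hNb] : exists N, forall k x, (N <= k)%N -> ~ Omb k x by case: hb.
have [Ns hNs] : exists N, forall k x, (N <= k)%N -> ~ Oms k x by case: hs.
set N := (Nb + Ns).+1.
have vb : forall k x, (N <= k)%N -> ~ Omb k x by move=> k x h; apply: hNb; lia.
have vs : forall k x, (N <= k)%N -> ~ Oms k x by move=> k x h; apply: hNs; lia.
have vc : forall k x, (N <= k)%N -> ~ Omc k x by move=> k x h [] ; [apply: vb | apply: vs].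
have inU : forall Om, (forall k x, (N <= k)%N -> ~ Om k x) ->
    forall u, mesh K0 Om u -> u \in U K0 N.
  move=> Om hN [k a] [ca sa _]; apply: memU => //; exact: cell_lvl hN ca sa.
have inU0 : forall u, mesh0 K0 u -> u \in U K0 N.
  by move=> [k a] [/= -> ca]; apply: memU.
have eb : nb = count (fun u : nat * {ffun 'I_d -> nat} => bo (mesh K0 Omb u)) (U K0 N)
  := card_uniq (U_uniq _ _) (inU _ vb) cb.
have es : ns = count (fun u : nat * {ffun 'I_d -> nat} => bo (mesh K0 Oms u)) (U K0 N)
  := card_uniq (U_uniq _ _) (inU _ vs) cs.
have e0 : n0 = count (fun u : nat * {ffun 'I_d -> nat} => bo (mesh0 K0 u)) (U K0 N)
  := card_uniq (U_uniq _ _) inU0 c0.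
exists (count (fun u => bo (mesh K0 Omc u)) (U K0 N)); split.
  apply: card_count; [exact: U_uniq | exact: inU _ vc].
rewrite eb es e0 (mesh_count hK hb vb) (mesh_count hK hs vs) (mesh_count hK hc vc).
set C0 := count _ (U K0 N).
suff : ((\sum_(u <- U K0 N) bo (Rf K0 Omc u) * (ch K0 N u).-1) <=
  (\sum_(u <- U K0 N) bo (Rf K0 Omb u) * (ch K0 N u).-1) +
  (\sum_(u <- U K0 N) bo (Rf K0 Oms u) * (ch K0 N u).-1))%N by lia.
rewrite -big_split /=; apply: leq_sum => u _.
rewrite -mulnDl; apply: leq_mul => //.
case: (boP (Rf K0 Omc u)) => [[cu su]|] //.
case: (su _ (inside_cell (ctr_inside cu))) => h.
  have := in_Om_sub hK hb cu (ctr_inside cu) h => hs'.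
  by case: (boP (Rf K0 Omb u)) => // [[]]; split.
have := in_Om_sub hK hs cu (ctr_inside cu) h => hs'.
case: (boP (Rf K0 Oms u)) => [_|[]]; last by split.
by rewrite addn1.
Qed.
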